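(* For each $n\ge 3$ there is a bounded non-commutative BCK-algebra $\mathcal B$ of order $n$ with $\operatorname{dnd}(\mathcal B)=\frac2n$.
   Context: A BCK-algebra is a set $A$ with a binary operation $\cdot$ and a constant $0$ such that for all $x,y,z\in A$: (BCK1) $((x\cdot y)\cdot(x\cdot z))\cdot(z\cdot y)=0$; (BCK2) $(x\cdot(x\cdot y))\cdot y=0$; (BCK3) $x\cdot x=0$; (BCK4) $0\cdot x=0$; (BCK5) $x\cdot y=0$ and $y\cdot x=0$ imply $x=y$. Define $x\wedge y:=y\cdot(y\cdot x)$; the algebra is commutative if $x\wedge y=y\wedge x$ for all $x,y$. A bounded BCK-algebra has a distinguished element $1$ with $x\cdot 1=0$ for all $x$; $\neg x:=1\cdot x$. For a finite bounded BCK-algebra $\mathcal A$, the double negation degree is $\operatorname{dnd}(\mathcal A)=|\{x\in\mathcal A:\neg\neg x=x\}|/|\mathcal A|$. The order of a finite algebra is its cardinality. *)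

(* Defs.v *)
From mathcomp Require Import all_boot all_order all_algebra.
Set Implicit Arguments. Unset Strict Implicit. Unset Printing Implicit Defensive.

Definition is_BCK (T : Type) (op : T -> T -> T) (zero : T) : Prop :=
  [/\ (forall x y z, op (op (op x y) (op x z)) (op z y) = zero),
      (forall x y, op (op x (op x y)) y = zero),
      (forall x, op x x = zero),
      (forall x, op zero x = zero) &
      (forall x y, op x y = zero -> op y x = zero -> x = y)].

Definition bck_meet (T : Type) (op : T -> T -> T) (x y : T) : T := op y (op y x).

Definition is_commutative_BCK (T : Type) (op : T -> T -> T) : Prop :=
  forall x y, bck_meet op x y = bck_meet op y x.

Definition is_bounded_BCK (T : Type) (op : T -> T -> T) (zero one : T) : Prop :=
  is_BCK op zero /\ (forall x, op x one = zero).

Definition bck_neg (T : Type) (op : T -> T -> T) (one x : T) : T := op one x.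

Definition dnd (T : finType) (op : T -> T -> T) (one : T) : rat :=
  (#|[set x : T | bck_neg op one (bck_neg op one x) == x]|%:R / #|T|%:R)%R.

(* Main.v *)
Require Import Defs.
From mathcomp Require Import all_boot all_order all_algebra.
From mathcomp Require Import zify.

Definition cop (m : nat) (x y : 'I_m.+1) : 'I_m.+1 := if x <= y then ord0 else x.

Lemma cop_bck m : is_bounded_BCK (@cop m) ord0 ord_max.
Proof.
split; last first.
  by move=> x; rewrite /cop -ltnS ltn_ord.
split.
- move=> x y z; apply/val_inj; rewrite /cop.
  case: (leqP x y) => h1 /=; first by [].
  case: (leqP x z) => h2 /=.
    have -> : (x <= 0) = false by lia.
    case: (leqP z y) => h3 /=; first lia.
    by rewrite h2.
  by rewrite leqnn.
- move=> x y; apply/val_inj; rewrite /cop.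
  case: (leqP x y) => h1 /=.
    case: (leqP x 0) => h2 /=; first by [].
    by rewrite h1.
  by rewrite leqnn.
- by move=> x; rewrite /cop leqnn.
- by move=> x; rewrite /cop.
- move=> x y; rewrite /cop.
  case: (leqP x y) => h1; case: (leqP y x) => h2 => E1 E2; apply/val_inj;
    move/(congr1 val): E1; move/(congr1 val): E2 => /= E2 E1; lia.
Qed.

Theorem theorem4p4 :
  forall n : nat, 3 <= n ->
    exists (T : finType) (op : T -> T -> T) (zero one : T),
      [/\ is_bounded_BCK op zero one,
          ~ is_commutative_BCK op,
          #|T| = n &
          dnd op one = (2%:R / n%:R)%R].
Proof.
case=> [//|m] hm.
exists ('I_m.+1), (@cop m), ord0, ord_max.
split.
- exact: cop_bck.
- move=> C.
  have h1 : 1 < m.+1 by lia.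
  have := C (Ordinal h1) ord_max.
  rewrite /bck_meet /cop /=.
  have -> : (m <= 1) = false by lia.
  have -> : (0 < m) = true by lia.
  have -> : (m <= (ord_max : 'I_m.+1)) = true by apply: leqnn.
  have -> : (0 < (ord0 : 'I_m.+1)) = false by [].
  by move=> /(congr1 val).
- by rewrite card_ord.
- rewrite /dnd card_ord; congr (_ / _)%R.
  have -> : [set x : 'I_m.+1 | bck_neg (@cop m) ord_max (bck_neg (@cop m) ord_max x) == x]
          = [set ord0; ord_max].
    apply/setP => x; rewrite !inE /bck_neg /cop /=.
    have hx := ltn_ord x.
    case: (leqP m x) => h /=.
      have -> : (m <= (ord0 : 'I_m.+1)) = false by rewrite /=; lia.
      have -> : x = ord_max by apply/val_inj => /=; lia.
      by rewrite !eqxx orbT.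
    have -> : (m <= (ord_max : 'I_m.+1)) = true by apply: leqnn.
    have -> : (x == ord_max) = false by apply/negbTE/eqP => /(congr1 val) /=; lia.
    by rewrite orbF eq_sym.
  rewrite cards2.
  have -> : (ord0 == ord_max :> 'I_m.+1) = false.
    by apply/negbTE/eqP => /(congr1 val) /=; lia.
  by rewrite /=.
Qed.
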